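(* Every matroid of finite rank is unionable: if $F$ is a matroid of finite rank and $N$ is any matroid, then $F\vee N$ is a matroid.
   Context: Matroids (possibly infinite) $(E,\mathcal{L})$: $\emptyset\in\mathcal{L}$; subsets of independent sets are independent; if $B$ is maximal in $\mathcal{L}$ and $A\in\mathcal{L}$ is not maximal, then $A\cup\{b\}\in\mathcal{L}$ for some $b\in B\setminus A$; for $A\in\mathcal{L}$ and $A\subseteq X\subseteq E$, $\{S\in\mathcal{L}:A\subseteq S\subseteq X\}$ has a maximal element. The rank is the cardinality of a base (maximal independent set). The union $F\vee N$ has ground set $E(F)\cup E(N)$ and independent sets $\{S\cup T: S\in\mathcal{L}(F),\ T\in\mathcal{L}(N)\}$. A matroid $F$ is unionable if $F\vee N$ is a matroid for every matroid $N$. *)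

(* Defs.v *)
From mathcomp Require Import all_boot.
From mathcomp Require Import boolp classical_sets cardinality.
Set Implicit Arguments. Unset Strict Implicit. Unset Printing Implicit Defensive.
Local Open Scope classical_set_scope.

Definition maximal_in (T : Type) (Fam : set (set T)) (B : set T) : Prop :=
  Fam B /\ (forall S, Fam S -> B `<=` S -> S = B).

Record is_matroid (T : Type) (E : set T) (L : set (set T)) : Prop := {
  indep_sub_ground : forall S, L S -> S `<=` E;
  indep_empty : L set0;
  indep_subset : forall S S', L S -> S' `<=` S -> L S';
  indep_augment : forall A B, maximal_in L B -> L A -> ~ maximal_in L A ->
      exists b, B b /\ ~ A b /\ L (A `|` [set b]);
  indep_max : forall A X, L A -> A `<=` X -> X `<=` E ->
      exists M, maximal_in [set S | L S /\ A `<=` S /\ S `<=` X] M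
}.

Definition is_base (T : Type) (L : set (set T)) (B : set T) : Prop := maximal_in L B.

Definition finite_rank (T : Type) (L : set (set T)) : Prop :=
  exists B, is_base L B /\ finite_set B.

Definition union_indep (T : Type) (L1 L2 : set (set T)) : set (set T) :=
  [set I | exists S U, L1 S /\ L2 U /\ I = S `|` U].

(* Main.v *)
Require Import Defs.
From mathcomp Require Import all_boot.
From mathcomp Require Import boolp classical_sets cardinality.
Local Open Scope classical_set_scope.

Section Atmost.
Context {T : Type}.

Fixpoint atmost (D : set T) (n : nat) : Prop :=
  match n with
  | 0 => forall x, ~ D x
  | m.+1 => forall x, D x -> atmost (D `\ x) m
  end.
Arguments atmost D n : simpl never.

Lemma atmostS (D : set T) n :
  atmost D n.+1 = forall x, D x -> atmost (D `\ x) n.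
Proof. by []. Qed.
Lemma atmost0 (D : set T) : atmost D 0 = forall x, ~ D x.
Proof. by []. Qed.

Lemma atmost_sub (D D' : set T) n : D' `<=` D -> atmost D n -> atmost D' n.
Proof.
elim: n D D' => [|n IH] D D' sub.
  by rewrite !atmost0 => H x /sub /H.
rewrite !atmostS => H x /[dup] Dx /sub /H; apply: IH => y /= [D'y ny]; split => //; exact: sub.
Qed.

Lemma atmost_S n (D : set T) : atmost D n -> atmost D n.+1.
Proof.
elim: n D => [|n IH] D.
  by rewrite atmost0 atmostS => H x Dx; case: (H x).
by rewrite atmostS [in X in _ -> X]atmostS => H x Dx; apply: IH; apply: H.
Qed.

Lemma atmost_le n m (D : set T) : (n <= m)%N -> atmost D n -> atmost D m.
Proof.
move=> /subnKC <-; elim: (m - n)%N => [|k IH]; first by rewrite addn0.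
by move=> H; rewrite addnS; apply: atmost_S; apply: IH.
Qed.

Lemma atmost_add n (D : set T) a : atmost D n -> atmost (D `|` [set a]) n.+1.
Proof.
elim: n D => [|n IH] D.
  rewrite atmost0 atmostS => H x Dx; rewrite atmost0 => y [[Dy|ya] nyx]; first by case: (H y).
  by apply: nyx; case: Dx => [/H|] //; rewrite ya.
rewrite atmostS [in X in _ -> X]atmostS => H x Dx.
have [exa|nxa] := pselect (x = a).
  subst x; apply: (atmost_sub D); last by rewrite atmostS.
  by move=> y /= [[Dy|ya] nya].
case: Dx => [Dx|//].
apply: (atmost_sub ((D `\ x) `|` [set a])); last by apply: IH; apply: H.
by move=> y /= [[Dy|ya] nyx]; [left|right].
Qed.

Lemma atmost_U a b (A B : set T) : atmost A a -> atmost B b -> atmost (A `|` B) (a + b).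
Proof.
suff: forall k a b (A B : set T), (a + b)%N = k -> atmost A a -> atmost B b ->
  atmost (A `|` B) k by move=> /(_ (a + b)%N a b A B erefl).
elim => [|k IH] {}a {}b {}A {}B e HA HB.
  move: e => /eqP; rewrite addn_eq0 => /andP[/eqP a0 /eqP b0].
  move: HA HB; rewrite a0 b0 !atmost0 => HA HB x [/HA|/HB] //.
rewrite atmostS => x Ax.
have [xA|nxA] := pselect (A x).
  case: a e HA => [|a] e; rewrite ?atmost0 ?atmostS => HA; first by case: (HA x).
  apply: (atmost_sub ((A `\ x) `|` B)); last first.
    by apply: (IH a b) => //; [rewrite addSn in e; case: e| apply: HA].
  by move=> y /= [[Ay|By] nyx]; [left|right].
case: Ax => // xB.
case: b e HB => [|b] e; rewrite ?atmost0 ?atmostS => HB; first by case: (HB x).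
apply: (atmost_sub (A `|` (B `\ x))); last first.
  by apply: (IH a b) => //; [rewrite addnS in e; case: e| apply: HB].
by move=> y /= [[Ay|By] nyx]; [left|right].
Qed.

Lemma atmost_rem p (D : set T) z : atmost D p -> D z ->
  exists p', p = p'.+1 /\ atmost (D `\ z) p'.
Proof.
case: p => [|p]; rewrite ?atmost0 ?atmostS => H Dz; first by case: (H z).
by exists p; split => //; apply: H.
Qed.

Lemma atmost_min n (D : set T) : atmost D n ->
  exists p, atmost D p /\ forall q, (q < p)%N -> ~ atmost D q.
Proof.
suff: forall k m, (m <= k)%N -> atmost D m ->
  exists p, atmost D p /\ forall q, (q < p)%N -> ~ atmost D q by apply; apply: leqnn.
elim => [|k IH] m le H.
  by exists m; split => // q qm; move: (leq_trans qm le); rewrite ltn0.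
have [[q [qm Hq]]|] := pselect (exists q, (q < m)%N /\ atmost D q).
  by apply: (IH q) => //; exact: leq_trans qm le.
move=> nq; exists m; split => // q qm Hq; apply: nq; by exists q.
Qed.

Lemma atmost_finite (D : set T) : finite_set D -> exists n, atmost D n.
Proof.
move=> /finite_set_leP[n /pcard_leP /injfunPex[f ff fi]].
exists n.
suff: forall k, atmost [set y | D y /\ (f y < k)%N] k.
  by move=> /(_ n); apply: atmost_sub => y Dy; split => //; apply: ff.
elim => [|k IH]; first by rewrite atmost0 => y /= [_]; rewrite ltn0.
have [[y0 [Dy0 fy0]]|] := pselect (exists y, D y /\ f y = k).
  apply: (atmost_sub ([set y | D y /\ (f y < k)%N] `|` [set y0])); last first.
    exact: atmost_add.
  move=> y /= [Dy]; rewrite ltnS leq_eqVlt => /orP[/eqP fyk|]; last by left.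
  right; apply: fi; rewrite ?inE //; by rewrite fyk fy0.
move=> nex; apply: atmost_S; apply: (atmost_sub [set y | D y /\ (f y < k)%N]) => //.
move=> y /= [Dy]; rewrite ltnS leq_eqVlt => /orP[/eqP fyk|//].
by case: nex; exists y.
Qed.

End Atmost.

Section Mat.
Context {T : Type}.
Variables (E : set T) (L : set (set T)).
Hypothesis hM : is_matroid E L.

Lemma Lsub S S' : L S -> S' `<=` S -> L S'.
Proof. by move=> LS sub; apply: (indep_subset hM) LS sub. Qed.
Arguments Lsub [S S'].

Lemma Lground S : L S -> S `<=` E.
Proof. exact: (indep_sub_ground hM). Qed.
Arguments Lground [S].

Lemma max_single (Fam : set (set T)) B y :
  maximal_in Fam B -> ~ B y -> ~ Fam (B `|` [set y]).
Proof.
move=> [FB Hm] nBy FBy; have e := Hm _ FBy (@subsetUl _ B [set y]).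
by apply: nBy; rewrite -e; right.
Qed.

Lemma ext_max A X : L A -> A `<=` X -> X `<=` E ->
  exists M, L M /\ A `<=` M /\ M `<=` X /\
    (forall y, X y -> ~ M y -> ~ L (M `|` [set y])).
Proof.
move=> LA AX XE; have [M [[LM [AM MX]] Hm]] := indep_max hM LA AX XE.
exists M; split; [done|split; [done|split; [done|]]] => y Xy nMy LMy.
have e : M `|` [set y] = M.
  apply: Hm; last by move=> x Mx; left.
  split => //; split; first by move=> x /AM; left.
  by move=> x [/MX|->].
by apply: nMy; rewrite -e; right.
Qed.
Arguments ext_max [A X].

Lemma is_max_of B : L B -> (forall y, E y -> ~ B y -> ~ L (B `|` [set y])) ->
  maximal_in L B.
Proof.
move=> LB Bm; split => // S LS BS; apply/seteqP; split => // x Sx.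
case: (pselect (B x)) => // nBx; exfalso.
apply: (Bm x (Lground LS x Sx) nBx).
by apply: (Lsub LS) => y [/BS|->].
Qed.
Arguments is_max_of [B].

Lemma RI3 Y B A z : L B -> B `<=` Y ->
  (forall y, Y y -> ~ B y -> ~ L (B `|` [set y])) ->
  L A -> A `<=` Y -> Y z -> ~ A z -> L (A `|` [set z]) ->
  exists b, B b /\ ~ A b /\ L (A `|` [set b]).
Proof.
move=> LB BY Bm LA AY Yz nAz LAz.
apply: contrapT => H.
have H' : forall b, B b -> ~ A b -> ~ L (A `|` [set b]).
  by move=> b Bb nAb Lb; apply: H; exists b.
have [B' [LB' [BB' [B'E B'm]]]] := ext_max LB (Lground LB) (@subset_refl _ E).
have B'base : maximal_in L B' by apply: is_max_of.
have XE : (A `|` [set z]) `|` B' `<=` E.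
  by move=> x [h|h]; [exact: Lground LAz x h| exact: B'E x h].
have [V [LV [AzV [VX Vm]]]] := ext_max LAz (@subsetUl _ _ B') XE.
have Vbase : maximal_in L V.
  apply: contrapT => nV; have [b' [B'b' [nVb' LVb']]] := indep_augment hM B'base LV nV.
  by apply: (Vm b') => //; right.
pose G := V `\` (A `|` [set z]).
have LBG : L (B `|` G).
  apply: (Lsub LB') => x [/BB'//|[Vx nAzx]].
  by case: (VX x Vx).
have BGbase : maximal_in L (B `|` G).
  apply: contrapT => nBG.
  have [v [Vv [nBGv LBGv]]] := indep_augment hM Vbase LBG nBG.
  have Av : (A `|` [set z]) v.
    by apply: contrapT => nAv; apply: nBGv; right.
  apply: (Bm v).
  - by case: Av => [/AY|->].
  - by move=> Bv; apply: nBGv; left.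
  - by apply: (Lsub LBGv) => x [Bx|->]; [left; left|right].
have LAG : L (A `|` G).
  by apply: (Lsub LV) => x [Ax|[]//]; apply: AzV; left.
have AGbase : maximal_in L (A `|` G).
  apply: contrapT => nAG.
  have [w [BGw [nAGw LAGw]]] := indep_augment hM BGbase LAG nAG.
  case: BGw => [Bw|Gw]; last by apply: nAGw; right.
  apply: (H' w Bw); first by move=> Aw; apply: nAGw; left.
  by apply: (Lsub LAGw) => x [Ax|->]; [left; left|right].
have e : V = A `|` G.
  by apply: (proj2 AGbase V LV) => x [Ax|[]//]; apply: AzV; left.
have : (A `|` G) z by rewrite -e; apply: AzV; right.
by case => [//|[_]]; apply; right.
Qed.
Arguments RI3 [Y B A z].

Lemma trans_span P Q y : L P -> L Q ->
  (forall q, Q q -> ~ P q -> ~ L (P `|` [set q])) -> ~ P y ->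
  (Q y \/ ~ L (Q `|` [set y])) -> ~ L (P `|` [set y]).
Proof.
move=> LP LQ hPQ nPy [Qy|nQy]; first exact: hPQ.
move=> LPy.
pose Y := ((P `|` Q) `|` [set y]) `&` E.
have QY : Q `<=` Y by move=> x Qx; split; [left; right|exact: (Lground LQ)].
have [W [LW [QW [WY Wm]]]] := ext_max LQ QY (@subIsetr _ _ _).
have nWy : ~ W y.
  by move=> Wy; apply: nQy; apply: (Lsub LW) => x [/QW|->].
have PY : P `<=` Y by move=> x Px; split; [left; left|exact: (Lground LP)].
have Yy : Y y by split; [right|apply: (Lground LPy); right].
have [b [Wb [nPb LPb]]] := RI3 LW WY Wm LP PY Yy nPy LPy.
case: (WY b Wb) => [[[Pb|Qb]|eb] _] //.
- exact: (hPQ b Qb nPb).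
- by apply: nWy; rewrite -eb.
Qed.
Arguments trans_span [P Q y].

Lemma exr m Y J K : L J -> J `<=` Y ->
  (forall y, Y y -> ~ J y -> ~ L (J `|` [set y])) -> L K -> K `<=` Y ->
  atmost (J `\` K) m -> atmost (K `\` J) m.
Proof.
move=> LJ JY Jm.
have step : forall K x, L K -> K `<=` Y -> K x -> ~ J x ->
    exists b, J b /\ ~ K b /\ L ((K `\ x) `|` [set b]).
  move=> K0 x LK0 K0Y K0x nJx.
  have LK0x : L (K0 `\ x) by apply: (Lsub LK0) => y [].
  have [b [Jb [nb Lb]]] := RI3 LJ JY Jm LK0x (fun y h => K0Y y (proj1 h))
    (K0Y x K0x) (fun h => proj2 h erefl) (Lsub LK0 (fun y h => match h with
       | or_introl h1 => proj1 h1 | or_intror h2 => eq_ind_r _ K0x h2 end)).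
  exists b; split => //; split => // K0b.
  apply: nb; split => // ebx; apply: nJx; by rewrite -ebx.
elim: m K => [|m IH] K LK KY.
  rewrite !atmost0 => H x [Kx nJx].
  have [b [Jb [nKb _]]] := step K x LK KY Kx nJx.
  by apply: (H b).
rewrite !atmostS => H x [Kx nJx].
have [b [Jb [nKb LK']]] := step K x LK KY Kx nJx.
have K'Y : (K `\ x) `|` [set b] `<=` Y by move=> y [[/KY]//|->]; apply: JY.
have := IH _ LK' K'Y.
have sub1 : J `\` ((K `\ x) `|` [set b]) `<=` (J `\` K) `\ b.
  move=> y [Jy nK'y]; split; last by move=> eyb; apply: nK'y; right.
  split => // Ky; apply: nK'y; left; split => // eyx; apply: nJx; by rewrite -eyx.
move=> /(_ (atmost_sub _ _ _ sub1 (H b (conj Jb nKb)))).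
apply: atmost_sub => y [[Ky nJy] nyx]; split => //; left; by split.
Qed.
Arguments exr [m Y J K].

Lemma indep_bound B0 n : maximal_in L B0 -> atmost B0 n ->
  forall A, L A -> atmost A (n + n).
Proof.
move=> B0m B0n A LA.
have LB0 := proj1 B0m.
have H : atmost (A `\` B0) n.
  apply: (exr (Y := E)) => //; first exact: Lground.
  - by move=> y _; apply: max_single.
  - exact: Lground.
  - by apply: atmost_sub B0n => x [].
apply: (atmost_sub ((A `\` B0) `|` B0)); last exact: atmost_U.
by move=> x Ax; case: (pselect (B0 x)) => ?; [right|left].
Qed.

End Mat.

Arguments Lsub {T E L} hM [S S'].
Arguments Lground {T E L} hM [S].
Arguments ext_max {T E L} hM [A X].
Arguments RI3 {T E L} hM [Y B A z].
Arguments trans_span {T E L} hM [P Q y].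
Arguments exr {T E L} hM [m Y J K].
Arguments indep_bound {T E L} hM [B0 n].
Arguments max_single {T Fam B y}.
Arguments atmost_sub {T} [D D' n].
Arguments atmost_rem {T} [p D z].
Arguments atmost_U {T} [a b A B].
Arguments atmost_min {T} [n D].
Arguments atmost_finite {T} [D].

Section Union.
Context {T : Type}.
Variables (EF : set T) (LF : set (set T)) (EN : set T) (LN : set (set T)).
Hypotheses (hF : is_matroid EF LF) (hN : is_matroid EN LN).
Variable R : nat.
Hypothesis hR : forall A, LF A -> atmost A R.

Local Notation LM := (union_indep LF LN).

Definition rep (S U I : set T) := LF S /\ LN U /\ (forall x, S x -> U x -> False) /\
  (forall x, I x <-> S x \/ U x).

Lemma LM_rep I : LM I -> exists S U, rep S U I.
Proof.
move=> [S [U [LS [LU ->]]]]; exists S, (U `\` S).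
split => //; split; first by apply: (Lsub hN LU) => x [].
split; first by move=> x Sx [].
move=> x; split => [[Sx|Ux]|[Sx|[Ux _]]]; [by left| |by left|by right].
by case: (pselect (S x)) => ?; [left|right].
Qed.
Arguments LM_rep [I].

Lemma rep_LM S U I : rep S U I -> LM I.
Proof.
move=> [LS [LU [_ cov]]]; exists S, U; split => //; split => //.
by apply/seteqP; split => x /cov.
Qed.
Arguments rep_LM [S U I].

Lemma LM_sub I I' : LM I -> I' `<=` I -> LM I'.
Proof.
move=> [S [U [LS [LU ->]]]] sub; exists (S `&` I'), (U `&` I').
split; first by apply: (Lsub hF LS) => x [].
split; first by apply: (Lsub hN LU) => x [].
apply/seteqP; split => x.
  by move=> I'x; case: (sub x I'x) => ?; [left|right].
by move=> [[]|[]].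
Qed.
Arguments LM_sub [I I'].

Definition dis (SJ UJ S U : set T) := [set e | (S e /\ UJ e) \/ (U e /\ SJ e)].

Lemma improve I SJ UJ S U : (forall x, SJ x -> UJ x -> False) ->
  (forall y, SJ y \/ UJ y -> ~ I y -> ~ LM (I `|` [set y])) -> rep S U I ->
  ~ ((forall y, SJ y -> ~ S y -> ~ LF (S `|` [set y])) /\
     (forall y, UJ y -> ~ U y -> ~ LN (U `|` [set y]))) ->
  exists y S' U', rep S' U' I /\ dis SJ UJ S U y /\
    dis SJ UJ S' U' `<=` dis SJ UJ S U `\ y.
Proof.
move=> dJ HI [LS [LU [dSU cov]]] nboth.
have [h1|h1] := pselect (forall y, SJ y -> ~ S y -> ~ LF (S `|` [set y])); last first.
  have [y [SJy [nSy LSy]]] : exists y, SJ y /\ ~ S y /\ LF (S `|` [set y]).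
    by apply: contrapT => nex; apply: h1 => y SJy nSy LSy; apply: nex; exists y.
  have Iy : I y.
    apply: contrapT => nIy; apply: (HI y (or_introl SJy) nIy).
    exists (S `|` [set y]), U; split => //; split => //.
    apply/seteqP; split => x.
      by move=> [/cov [Sx|Ux]|->]; [left; left|right|left; right].
    by move=> [[Sx|->]|Ux]; [left; apply/cov; left|right|left; apply/cov; right].
  have Uy : U y by case: ((cov y).1 Iy).
  exists y, (S `|` [set y]), (U `\ y); split; last first.
    split; first by right.
    move=> e [[[Se|->] UJe]|[[Ue ney] SJe]].
    - by split; [left|move=> eey; apply: nSy; rewrite -eey].
    - by case: (dJ y SJy UJe).
    - by split => //; right.
  split => //; split; first by apply: (Lsub hN LU) => x [].
  split; first by move=> x [Sx|->] [Ux nx]; [exact: (dSU x Sx Ux)|apply: nx].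
  move=> x; split.
    by move=> /cov [Sx|Ux]; [left; left|case: (pselect (x = y)) => [->|?]; [left; right|right]].
  by move=> [[Sx|->]|[Ux _]]; [apply/cov; left|by []|apply/cov; right].
have [h2|h2] := pselect (forall y, UJ y -> ~ U y -> ~ LN (U `|` [set y])).
  by case: nboth.
have [y [UJy [nUy LUy]]] : exists y, UJ y /\ ~ U y /\ LN (U `|` [set y]).
  by apply: contrapT => nex; apply: h2 => y UJy nUy LUy; apply: nex; exists y.
have Iy : I y.
  apply: contrapT => nIy; apply: (HI y (or_intror UJy) nIy).
  exists S, (U `|` [set y]); split => //; split => //.
  apply/seteqP; split => x.
    by move=> [/cov [Sx|Ux]|->]; [left|right; left|right; right].
  by move=> [Sx|[Ux|->]]; [left; apply/cov; left|left; apply/cov; right|right].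
have Sy : S y by case: ((cov y).1 Iy).
exists y, (S `\ y), (U `|` [set y]); split; last first.
  split; first by left.
  move=> e [[[Se ney] UJe]|[[Ue|->] SJe]].
  - by split => //; left.
  - by split; [right|move=> eey; apply: nUy; rewrite -eey].
  - by case: (dJ y SJe UJy).
split; first by apply: (Lsub hF LS) => x [].
split => //; split; first by move=> x [Sx nx] [Ux|exy]; [exact: (dSU x Sx Ux)|apply: nx].
move=> x; split.
  by move=> /cov [Sx|Ux]; [case: (pselect (x = y)) => [->|?]; [right; right|left]|right; left].
by move=> [[Sx _]|[Ux|->]]; [apply/cov; left|apply/cov; right|by []].
Qed.
Arguments improve [I SJ UJ S U].

Lemma augc I SJ UJ : LM I -> LF SJ -> LN UJ -> (forall x, SJ x -> UJ x -> False) ->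
  (forall y, SJ y \/ UJ y -> ~ I y -> ~ LM (I `|` [set y])) ->
  exists SI UI, rep SI UI I /\ (forall y, SJ y -> ~ SI y -> ~ LF (SI `|` [set y])) /\
    (forall y, UJ y -> ~ UI y -> ~ LN (UI `|` [set y])).
Proof.
move=> LI LSJ LUJ dJ HI.
suff: forall n S U, rep S U I -> atmost (dis SJ UJ S U) n ->
    exists SI UI, rep SI UI I /\ (forall y, SJ y -> ~ SI y -> ~ LF (SI `|` [set y])) /\
    (forall y, UJ y -> ~ UI y -> ~ LN (UI `|` [set y])).
  have [S [U rSU]] := LM_rep LI.
  move=> /(_ (R + R)%N S U rSU); apply.
  apply: (atmost_sub (D := S `|` SJ)); first by move=> x [[]|[]]; [left|right].
  by apply: atmost_U; apply: hR => //; case: rSU.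
elim => [|n IH] S U rSU Hd.
  have [[h1 h2]|nb] := pselect ((forall y, SJ y -> ~ S y -> ~ LF (S `|` [set y])) /\
     (forall y, UJ y -> ~ U y -> ~ LN (U `|` [set y]))).
    by exists S, U.
  have [y [S' [U' [_ [dy _]]]]] := improve dJ HI rSU nb.
  by have [p' [ep _]] := atmost_rem Hd dy.
have [[h1 h2]|nb] := pselect ((forall y, SJ y -> ~ S y -> ~ LF (S `|` [set y])) /\
   (forall y, UJ y -> ~ U y -> ~ LN (U `|` [set y]))).
  by exists S, U.
have [y [S' [U' [rS'U' [dy sub]]]]] := improve dJ HI rSU nb.
have [p' [ep Hp']] := atmost_rem Hd dy.
case: ep => ep; subst p'.
by apply: (IH S' U' rS'U'); apply: atmost_sub sub Hp'.
Qed.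
Arguments augc [I SJ UJ].

Lemma I3M A B : maximal_in LM B -> LM A -> ~ maximal_in LM A ->
  exists b, B b /\ ~ A b /\ LM (A `|` [set b]).
Proof.
move=> Bm LA nAm; apply: contrapT => H.
have H' : forall b, B b -> ~ A b -> ~ LM (A `|` [set b]).
  by move=> b Bb nAb Lb; apply: H; exists b.
have [z [nAz LAz]] : exists z, ~ A z /\ LM (A `|` [set z]).
  apply: contrapT => nz; apply: nAm; split => // S LS AS; apply/seteqP; split => // x Sx.
  apply: contrapT => nAx; apply: nz; exists x; split => //.
  by apply: (LM_sub LS) => y [/AS|->].
have [Sz [Uz rz]] := LM_rep LAz.
have [LSz [LUz [dz covz]]] := rz.
have [SB [UB [rB [hB1 hB2]]]] := augc (proj1 Bm) LSz LUz dz
  (fun y _ nBy => max_single Bm nBy).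
have [LSB [LUB [dB covB]]] := rB.
have [SA [UA [rA [hA1 hA2]]]] := augc LA LSB LUB dB
  (fun y h nAy => H' y ((covB y).2 h) nAy).
have [LSA [LUA [dA covA]]] := rA.
have tF : forall y, Sz y -> ~ SA y -> ~ LF (SA `|` [set y]).
  move=> y Szy nSAy; apply: (trans_span hF LSA LSB hA1 nSAy).
  by case: (pselect (SB y)) => SBy; [left|right; apply: hB1].
have tN : forall y, Uz y -> ~ UA y -> ~ LN (UA `|` [set y]).
  move=> y Uzy nUAy; apply: (trans_span hN LUA LUB hA2 nUAy).
  by case: (pselect (UB y)) => UBy; [left|right; apply: hB2].
have exF : forall m, atmost (SA `\` Sz) m -> atmost (Sz `\` SA) m.
  move=> m; apply: (exr hF LSA (@subsetUl _ SA Sz) _ LSz (@subsetUr _ SA Sz)).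
  by move=> y [//|Szy] nSAy; apply: tF.
have exN : forall m, atmost (UA `\` Uz) m -> atmost (Uz `\` UA) m.
  move=> m; apply: (exr hN LUA (@subsetUl _ UA Uz) _ LUz (@subsetUr _ UA Uz)).
  by move=> y [//|Uzy] nUAy; apply: tN.
have nSAz : ~ SA z by move=> SAz; apply: nAz; apply/covA; left.
have nUAz : ~ UA z by move=> UAz; apply: nAz; apply/covA; right.
have f1 : UA `\` Uz `<=` (Sz `\` SA) `\ z.
  move=> x [UAx nUzx]; split; last by move=> exz; apply: nUAz; rewrite -exz.
  split; last by move=> SAx; exact: (dA x SAx UAx).
  have : (A `|` [set z]) x by left; apply/covA; right.
  by move=> /covz [//|].
have f2 : SA `\` Sz `<=` (Uz `\` UA) `\ z.
  move=> x [SAx nSzx]; split; last by move=> exz; apply: nSAz; rewrite -exz.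
  split; last by move=> UAx; exact: (dA x SAx UAx).
  have : (A `|` [set z]) x by left; apply/covA; left.
  by move=> /covz [|].
have [p [Hp Hmin]] : exists p, atmost (SA `\` Sz) p /\
    forall q, (q < p)%N -> ~ atmost (SA `\` Sz) q.
  by apply: atmost_min; apply: (atmost_sub (D := SA)); [move=> x []|apply: hR].
have : Sz z \/ Uz z by apply/covz; right.
case => [Szz|Uzz].
  have [p' [ep Hp']] := atmost_rem (exF p Hp) (conj Szz nSAz).
  have H2 : atmost (UA `\` Uz) p' := atmost_sub f1 Hp'.
  apply: (Hmin p'); first by rewrite ep.
  by apply: (atmost_sub (D := Uz `\` UA)); [move=> x /f2 []|apply: exN].
have H2 : atmost (UA `\` Uz) p.
  by apply: (atmost_sub (D := Sz `\` SA)); [move=> x /f1 []|apply: exF].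
have [p' [ep Hp']] := atmost_rem (exN p H2) (conj Uzz nUAz).
apply: (Hmin p'); first by rewrite ep.
exact: atmost_sub f2 Hp'.
Qed.

Lemma nat_step (P : nat -> Prop) N : P 0 -> ~ P N -> exists k, P k /\ ~ P k.+1.
Proof.
elim: N => [|N IH] P0 nPN; first by [].
case: (pselect (P N)) => PN; first by exists N.
exact: IH.
Qed.

Lemma IMM A X : LM A -> A `<=` X -> X `<=` EF `|` EN ->
  exists M, maximal_in [set S | LM S /\ A `<=` S /\ S `<=` X] M.
Proof.
move=> LA AX XE.
pose fam := [set S | LM S /\ A `<=` S /\ S `<=` X].
pose wit J n := exists D, D `<=` J /\ atmost D n /\ LN (J `\` D).
have witR : forall J, LM J -> wit J R.
  move=> J [S [U [LS [LU ->]]]]; exists S; split; first exact: subsetUl.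
  split; first exact: hR.
  by apply: (Lsub hN LU) => x [[]].
have wit_le : forall J n m, (n <= m)%N -> wit J n -> wit J m.
  move=> J n m nm [D [DJ [Dn LD]]]; exists D; split => //; split => //.
  exact: atmost_le nm Dn.
have wit_sub : forall J J' n, J `<=` J' -> wit J' n -> wit J n.
  move=> J J' n JJ' [D [DJ [Dn LD]]]; exists (D `&` J); split; first by move=> x [].
  split; first by apply: atmost_sub Dn => x [].
  by apply: (Lsub hN LD) => x [Jx nDJx]; split; [apply: JJ'|move=> Dx; apply: nDJx].
pose P k := exists J, fam J /\ forall n, (n < k)%N -> ~ wit J n.
have P0 : P 0.
  by exists A; split; [split => //; split => //|move=> n; rewrite ltn0].
have nPR : ~ P R.+1 by move=> [J [fJ H]]; apply: (H R) => //; apply: witR; case: fJ.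
have [k [[J0 [fJ0 nwJ0]] nPk]] := nat_step _ _ P0 nPR.
have witk : forall J, fam J -> wit J k.
  move=> J fJ; apply: contrapT => nw; apply: nPk; exists J; split => // n.
  by rewrite ltnS => nk wn; apply: nw; exact: wit_le nk wn.
have [LJ0 [AJ0 J0X]] := fJ0.
have [S [U [LS [LU [dSU cov]]]]] := LM_rep LJ0.
pose X' := (X `\` S) `&` EN.
have UX' : U `<=` X'.
  move=> x Ux; split; last exact: (Lground hN LU x Ux).
  split; first by apply: J0X; apply/cov; right.
  by move=> Sx; exact: (dSU x Sx Ux).
have [Us [LUs [UUs [UsX' Usm]]]] := ext_max hN LU UX' (@subIsetr _ _ _).
pose I' := S `|` Us.
have J0I' : J0 `<=` I' by move=> x /cov [Sx|Ux]; [left|right; apply: UUs].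
have fI' : fam I'.
  split; first by exists S, Us.
  split; first by move=> x /AJ0 /J0I'.
  move=> x [Sx|Usx]; first by apply: J0X; apply/cov; left.
  by case: (UsX' x Usx) => [[]].
have nwI' : forall n, (n < k)%N -> ~ wit I' n.
  by move=> n nk w; apply: (nwJ0 n nk); exact: wit_sub J0I' w.
exists I'; split => // S2 fS2 I'S2; apply/seteqP; split => // y S2y.
apply: contrapT => nI'y.
have [LS2 [AS2 S2X]] := fS2.
pose K := I' `|` [set y].
have KS2 : K `<=` S2 by move=> x [/I'S2|->].
have fK : fam K.
  split; first exact: LM_sub LS2 KS2.
  split; first by move=> x Ax; left; apply: (proj1 (proj2 fI')).
  by move=> x /KS2 /S2X.
have [D [DK [Dk LKD]]] := witk K fK.
case: (pselect (D y)) => Dy.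
  have [k' [ek Hk']] := atmost_rem Dk Dy.
  apply: (nwI' k'); first by rewrite ek.
  exists (D `\ y); split.
    by move=> x [Dx nxy]; case: (DK x Dx) => // exy; case: nxy.
  split => //.
  apply: (Lsub hN LKD) => x [I'x nDx]; split; first by left.
  move=> Dx; apply: nDx; split => // exy; apply: nI'y; by rewrite -exy.
have DI' : D `<=` I'.
  by move=> x Dx; case: (DK x Dx) => // exy; exfalso; apply: Dy; rewrite -exy.
pose J1 := I' `\` D.
have LJ1 : LN J1 by apply: (Lsub hN LKD) => x [I'x nDx]; split => //; left.
have LJ1y : LN (J1 `|` [set y]).
  by apply: (Lsub hN LKD) => x [[I'x nDx]|->]; split => //; [left|right].
have J1m : forall c, Us c -> ~ J1 c -> ~ LN (J1 `|` [set c]).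
  move=> c Usc nJ1c LJ1c.
  have Dc : D c by apply: contrapT => nDc; apply: nJ1c; split => //; right.
  have [k' [ek Hk']] := atmost_rem Dk Dc.
  apply: (nwI' k'); first by rewrite ek.
  exists (D `\ c); split; first by move=> t [Dt _]; apply: DI'.
  split => //.
  apply: (Lsub hN LJ1c) => t [I't nDt].
  case: (pselect (t = c)) => [->|ntc]; first by right.
  by left; split => // Dt; apply: nDt.
have nJ1y : ~ J1 y by move=> [].
apply: (trans_span hN LJ1 LUs J1m nJ1y _ LJ1y).
right; apply: Usm; last by move=> Usy; apply: nI'y; right.
split; last exact: (Lground hN LJ1y y (or_intror erefl)).
split; first exact: S2X.
by move=> Sy; apply: nI'y; left.
Qed.

Lemma union_matroid : is_matroid (EF `|` EN) LM.
Proof.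
split.
- move=> I [S [U [LS [LU ->]]]] x [Sx|Ux]; [left; exact: (Lground hF LS x Sx)|
    right; exact: (Lground hN LU x Ux)].
- exists set0, set0; split; first exact: (indep_empty hF).
  split; first exact: (indep_empty hN).
  by rewrite setU0.
- by move=> S S' LS sub; exact: LM_sub LS sub.
- by move=> A B Bm LA nAm; exact: I3M.
- by move=> A X LA AX XE; exact: IMM.
Qed.

End Union.

Theorem theorem3p5p1 (T : Type) (EF : set T) (LF : set (set T))
    (EN : set T) (LN : set (set T)) :
  is_matroid EF LF -> finite_rank LF -> is_matroid EN LN ->
  is_matroid (EF `|` EN) (union_indep LF LN).
Proof.
move=> hF [B0 [B0b B0fin]] hN.
have [n B0n] := atmost_finite B0fin.
exact: (@union_matroid T EF LF EN LN hF hN _ (indep_bound hF B0b B0n)).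
Qed.
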